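(* Let $V$ be a real sequence and suppose that for some real $a$ with $|a|>1$, the equation $(-\Delta+V)\psi=0$ has a solution $\psi^-$ with $a^n\psi^-_n\to1$ as $n\to\infty$. Then: (i) every solution $\psi$ that is linearly independent of $\psi^-$ is exponentially increasing, in the sense that $a^{-n}\psi_n\to C\neq0$ as $n\to\infty$; (ii) for any solution $\psi$, the product $\psi_n\psi^-_n$ is bounded independently of $n$; (iii) given any boundary condition of the form $c\psi_1+d\psi_2=0$, if $0\notin\mathrm{sp}(-\Delta+V)$, then the Green matrix of $-\Delta+V$ on $n\ge1$ is uniformly bounded.
   Context: $(\Delta f)_n=f_{n+1}+f_{n-1}-2f_n$; $(-\Delta+V)\psi=0$ means $-\psi_{n+1}-\psi_{n-1}+(2+V_n)\psi_n=0$ for $n\ge1$. The Green matrix of $-\Delta+V$ on $n\ge1$ with the given boundary condition is $G_{mn}=\psi^+_{\min(m,n)}\psi^-_{\max(m,n)}/W[\psi^-,\psi^+]$, where $\psi^+$ is a solution satisfying the boundary condition and $W[\psi^-,\psi^+]=\psi^-_n\psi^+_{n+1}-\psi^-_{n+1}\psi^+_n$. *)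

(* Defs.v *)
From Stdlib Require Import Reals.
From Coquelicot Require Import Coquelicot.
Open Scope R_scope.

(* Sequences are functions nat -> R; only indices n >= 0 are meaningful,
   the equation is imposed for n >= 1 (so psi 0 enters at n = 1). *)

Definition schr (V psi : nat -> R) (n : nat) : R :=
  - psi (S n) - psi (Nat.pred n) + (2 + V n) * psi n.

Definition is_solution (V psi : nat -> R) : Prop :=
  forall n : nat, (1 <= n)%nat -> schr V psi n = 0.

Definition lin_indep (psi phi : nat -> R) : Prop :=
  ~ (exists al be : R, (al <> 0 \/ be <> 0) /\
        forall n : nat, al * psi n + be * phi n = 0).

Definition wronskian (phi psi : nat -> R) (n : nat) : R :=
  phi n * psi (S n) - phi (S n) * psi n.

(* Green matrix G_{mn} = psi+_{min(m,n)} psi-_{max(m,n)} / W[psi-, psi+]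
   (the Wronskian is constant for solutions; we evaluate it at n = 1). *)
Definition green (psim psip : nat -> R) (m n : nat) : R :=
  psip (Nat.min m n) * psim (Nat.max m n) / wronskian psim psip 1%nat.

Definition l2 (u : nat -> R) : Prop := ex_series (fun k => (u (S k)) ^ 2).
Definition l2norm2 (u : nat -> R) : R := Series (fun k => (u (S k)) ^ 2).

(* u solves (-Delta + V) u = f on n >= 1 with the boundary condition
   c psi_1 + d psi_2 = 0.  For a solution of the homogeneous equation
   psi_2 = (2 + V_1) psi_1 - psi_0, so the boundary condition is imposed on
   the auxiliary value u_0 as  c u_1 + d ((2 + V_1) u_1 - u_0) = 0  (the
   usual self-adjoint half-line boundary condition at the left end). *)
Definition bvp (V : nat -> R) (c d : R) (u f : nat -> R) : Prop :=
  (forall n : nat, (1 <= n)%nat -> schr V u n = f n) /\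
  c * u 1%nat + d * ((2 + V 1%nat) * u 1%nat - u 0%nat) = 0.

(* 0 is not in the spectrum of the half-line operator -Delta + V with this
   boundary condition: the operator is a bijection from its domain onto
   l^2(n >= 1) with a bounded inverse. *)
Definition zero_not_in_spectrum (V : nat -> R) (c d : R) : Prop :=
  exists C : R, 0 < C /\
    forall f : nat -> R, l2 f ->
      (exists u : nat -> R, l2 u /\ bvp V c d u f /\
                            l2norm2 u <= C * l2norm2 f) /\
      (forall u1 u2 : nat -> R, l2 u1 -> l2 u2 ->
         bvp V c d u1 f -> bvp V c d u2 f ->
         forall n : nat, (1 <= n)%nat -> u1 n = u2 n).

(* Main.v *)
Require Import Defs.
From Stdlib Require Import Reals Lra Lia Psatz.
From Coquelicot Require Import Coquelicot.
Open Scope R_scope.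

Lemma fin_bound (x : nat -> R) (N : nat) :
  exists M, forall n, (n < N)%nat -> Rabs (x n) <= M.
Proof.
  induction N as [|N [M HM]].
  - exists 0. intros n Hn. lia.
  - exists (Rmax M (Rabs (x N))). intros n Hn.
    destruct (Nat.eq_dec n N) as [->|Hne].
    + apply Rmax_r.
    + eapply Rle_trans; [apply HM; lia | apply Rmax_l].
Qed.

Lemma cv_bound (x : nat -> R) (l : R) :
  is_lim_seq x l -> exists M, forall n, Rabs (x n) <= M.
Proof.
  intros H. apply is_lim_seq_spec in H.
  destruct (H (mkposreal 1 Rlt_0_1)) as [N HN]. simpl in HN.
  destruct (fin_bound x N) as [M HM].
  exists (Rmax M (Rabs l + 1)). intros n.
  destruct (Nat.lt_ge_cases n N) as [h|h].
  - eapply Rle_trans; [apply HM; lia | apply Rmax_l].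
  - eapply Rle_trans; [|apply Rmax_r].
    specialize (HN n h).
    pose proof (Rabs_triang_inv (x n) l). lra.
Qed.

Lemma contr (e d r : nat -> R) (q : R) (N0 : nat) :
  0 <= q < 1 -> (forall n, (N0 <= n)%nat -> Rabs (r n) <= q) ->
  (forall n, (N0 <= n)%nat -> e (S n) = d n + r n * e n) ->
  is_lim_seq d 0 -> is_lim_seq e 0.
Proof.
  intros Hq Hr He Hd. apply is_lim_seq_spec. apply is_lim_seq_spec in Hd.
  intros eps. simpl in Hd.
  assert (Hp : 0 < eps / 2 * (1 - q)) by (pose proof (cond_pos eps); nra).
  destruct (Hd (mkposreal _ Hp)) as [N1 HN1]. simpl in HN1.
  set (N := Nat.max N0 N1).
  assert (Hk : forall k, Rabs (e (N + k)%nat) <= eps / 2 + q ^ k * Rabs (e N)).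
  { induction k.
    - simpl. rewrite Nat.add_0_r. pose proof (cond_pos eps). lra.
    - replace (N + S k)%nat with (S (N + k)) by lia.
      rewrite He by lia.
      assert (h1 : Rabs (d (N + k)%nat - 0) < eps / 2 * (1 - q)) by (apply HN1; lia).
      rewrite Rminus_0_r in h1.
      assert (h2 : Rabs (r (N + k)%nat) <= q) by (apply Hr; lia).
      eapply Rle_trans; [apply Rabs_triang|]. rewrite Rabs_mult.
      assert (h3 : Rabs (r (N+k)%nat) * Rabs (e (N+k)%nat) <= q * (eps / 2 + q ^ k * Rabs (e N))).
      { apply Rmult_le_compat; auto using Rabs_pos. }
      simpl. lra. }
  assert (Hy : 0 < eps / 2 / (Rabs (e N) + 1)).
  { pose proof (cond_pos eps). pose proof (Rabs_pos (e N)).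
    apply Rdiv_lt_0_compat; lra. }
  assert (Hq1 : Rabs q < 1) by (rewrite Rabs_pos_eq; lra).
  destruct (pow_lt_1_zero q Hq1 _ Hy) as [K HK].
  exists (N + K)%nat. intros n Hn.
  replace n with (N + (n - N))%nat by lia.
  rewrite Rminus_0_r.
  specialize (HK (n - N)%nat ltac:(lia)).
  rewrite <- RPow_abs, Rabs_pos_eq in HK by lra.
  assert (h4 : q ^ (n - N) * (Rabs (e N) + 1) < eps / 2).
  { apply Rmult_lt_compat_r with (r := Rabs (e N) + 1) in HK;
      [| pose proof (Rabs_pos (e N)); lra].
    unfold Rdiv in HK. rewrite Rmult_assoc, Rinv_l in HK by (pose proof (Rabs_pos (e N)); lra).
    lra. }
  pose proof (pow_le q (n - N) ltac:(lra)).
  specialize (Hk (n - N)%nat). nra.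
Qed.

Lemma wr_const (V p q : nat -> R) :
  is_solution V p -> is_solution V q -> forall n, wronskian p q n = wronskian p q 0.
Proof.
  intros Hp Hq n. induction n; [reflexivity|].
  rewrite <- IHn. unfold wronskian.
  pose proof (Hp (S n) ltac:(lia)) as h1. pose proof (Hq (S n) ltac:(lia)) as h2.
  unfold schr in h1, h2. simpl Nat.pred in h1, h2.
  assert (e1 : p (S (S n)) = (2 + V (S n)) * p (S n) - p n) by lra.
  assert (e2 : q (S (S n)) = (2 + V (S n)) * q (S n) - q n) by lra.
  rewrite e1, e2. ring.
Qed.

Lemma zero_sol (V f : nat -> R) :
  is_solution V f -> f 0%nat = 0 -> f 1%nat = 0 -> forall n, f n = 0.
Proof.
  intros Hf h0 h1.
  assert (H : forall n, f n = 0 /\ f (S n) = 0).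
  { induction n as [|n [IH1 IH2]]; [auto|]. split; auto.
    pose proof (Hf (S n) ltac:(lia)) as h. unfold schr in h. simpl Nat.pred in h.
    rewrite IH1, IH2 in h. lra. }
  intro n; apply H.
Qed.

Section Main.
Variables (V : nat -> R) (a : R) (psim : nat -> R).
Hypothesis Ha : 1 < Rabs a.
Hypothesis Hsol : is_solution V psim.
Hypothesis Hlim : is_lim_seq (fun n => a ^ n * psim n) 1.

Lemma a_nz : a <> 0.
Proof. intro h; rewrite h, Rabs_R0 in Ha; lra. Qed.

Lemma a2 : 1 < a ^ 2.
Proof.
  replace (a ^ 2) with (Rabs a * Rabs a).
  - nra.
  - rewrite <- Rabs_mult. rewrite Rabs_pos_eq; [ring|]. nra.
Qed.

Lemma key (psi : nat -> R) : is_solution V psi ->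
  is_lim_seq (fun n => psi n / a ^ n)
    (wronskian psim psi 0 * a / (a ^ 2 - 1)).
Proof.
  intros Hpsi.
  set (W := wronskian psim psi 0).
  set (phi := fun n => a ^ n * psim n).
  set (u := fun n => psi n / a ^ n).
  set (L := W * a / (a ^ 2 - 1)).
  pose proof a_nz as anz. pose proof a2 as ha2.
  assert (HW : forall n, W = a * phi n * u (S n) - phi (S n) * u n / a).
  { intro n. unfold W. rewrite <- (wr_const V psim psi Hsol Hpsi n).
    unfold wronskian, phi, u. simpl. field. split; auto. apply pow_nonzero; auto. }
  assert (Hphi : is_lim_seq phi 1) by exact Hlim.
  pose proof (proj2 (is_lim_seq_spec _ _) Hphi) as Hs.
  destruct (Hs (mkposreal (1/2) ltac:(lra))) as [N0 HN0]. simpl in HN0.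
  set (r := fun n => phi (S n) / (a ^ 2 * phi n)).
  set (d := fun n => W / (a * phi n) + r n * L - L).
  assert (Hr : is_lim_seq r (1 / (a ^ 2 * 1))).
  { apply is_lim_seq_div'.
    - apply (is_lim_seq_incr_1 phi 1). exact Hphi.
    - apply is_lim_seq_scal_l with (a := a ^ 2) in Hphi. exact Hphi.
    - lra. }
  assert (Hd : is_lim_seq d 0).
  { replace 0 with (W / (a * 1) + 1 / (a ^ 2 * 1) * L - L).
    2:{ unfold L. field. split; auto. lra. }
    apply is_lim_seq_minus'; [|apply is_lim_seq_const].
    apply is_lim_seq_plus'.
    - apply is_lim_seq_div'; [apply is_lim_seq_const| |].
      + apply is_lim_seq_scal_l with (a := a) in Hphi. exact Hphi.
      + lra.
    - apply is_lim_seq_mult'; [exact Hr | apply is_lim_seq_const]. }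
  set (q := (1 / a ^ 2 + 1) / 2).
  assert (Hq0 : 0 < 1 / a ^ 2 < 1).
  { split. apply Rdiv_lt_0_compat; lra.
    apply (Rmult_lt_reg_r (a ^ 2)); [lra|]. field_simplify; lra. }
  pose proof (proj2 (is_lim_seq_spec _ _) Hr) as Hrs.
  assert (Hqp : 0 < q - 1 / a ^ 2) by (unfold q; lra).
  destruct (Hrs (mkposreal (q - 1 / a ^ 2) Hqp)) as [N1 HN1].
  simpl in HN1.
  assert (He : is_lim_seq (fun n => u n - L) 0).
  { apply (contr _ d r q (Nat.max N0 N1)).
    - unfold q; lra.
    - intros n hn. specialize (HN1 n ltac:(lia)).
      pose proof (Rabs_triang_inv (r n) (1 / a ^ 2)).
      rewrite (Rabs_pos_eq (1 / a ^ 2)) in H by lra.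
      replace (1 / (a * (a * 1) * 1)) with (1 / a ^ 2) in HN1 by (simpl; field; auto). change (a * (a * 1)) with (a ^ 2) in HN1. lra.
    - intros n hn. specialize (HN0 n ltac:(lia)).
      assert (hp : phi n <> 0).
      { intro h; rewrite h in HN0. rewrite Rabs_minus_sym, Rminus_0_r, Rabs_R1 in HN0. lra. }
      unfold d, r. specialize (HW n).
      assert (hu : u (S n) = (W + phi (S n) * u n / a) / (a * phi n)).
      { rewrite HW. field. split; auto. }
      rewrite hu. field. split; auto.
    - exact Hd. }
  apply is_lim_seq_ext with (u := fun n => (u n - L) + L).
  { intro n; unfold u; ring. }
  replace (Finite L) with (Finite (0 + L)) by (f_equal; ring).
  apply is_lim_seq_plus'; [exact He | apply is_lim_seq_const].
Qed.

End Main.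

Theorem corollary1 (V : nat -> R) (a : R) (psim : nat -> R)
  (Ha : 1 < Rabs a)
  (Hsol : is_solution V psim)
  (Hlim : is_lim_seq (fun n => a ^ n * psim n) 1) :
  (* (i) *)
  (forall psi : nat -> R, is_solution V psi -> lin_indep psi psim ->
     exists C : R, C <> 0 /\ is_lim_seq (fun n => psi n / a ^ n) C) /\
  (* (ii) *)
  (forall psi : nat -> R, is_solution V psi ->
     exists B : R, forall n : nat, Rabs (psi n * psim n) <= B) /\
  (* (iii) *)
  (forall (c d : R) (psip : nat -> R),
     (c <> 0 \/ d <> 0) ->
     is_solution V psip ->
     (exists n : nat, psip n <> 0) ->
     c * psip 1%nat + d * psip 2%nat = 0 ->
     zero_not_in_spectrum V c d ->
     exists B : R, forall m n : nat, (1 <= m)%nat -> (1 <= n)%nat ->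
       Rabs (green psim psip m n) <= B).
Proof.
  pose proof (a_nz a Ha) as anz. pose proof (a2 a Ha) as ha2.
  destruct (cv_bound _ _ Hlim) as [Mp HMp].
  assert (Hprod : forall psi, is_solution V psi -> exists B, 0 <= B /\
             forall k l, (k <= l)%nat -> Rabs (psi k * psim l) <= B).
  { intros psi Hpsi. destruct (cv_bound _ _ (key V a psim Ha Hsol Hlim psi Hpsi)) as [Mu HMu].
    exists (Mu * Mp). assert (0 <= Mu) by (eapply Rle_trans; [apply Rabs_pos|apply (HMu 0%nat)]).
    assert (0 <= Mp) by (eapply Rle_trans; [apply Rabs_pos|apply (HMp 0%nat)]).
    split; [nra|]. intros k l hkl.
    assert (hk : a ^ k <> 0) by (apply pow_nonzero; auto).
    assert (hl : a ^ (l - k) <> 0) by (apply pow_nonzero; auto).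
    replace (psi k * psim l) with ((psi k / a ^ k) * (a ^ l * psim l) * / a ^ (l - k)).
    2:{ assert (hal : a ^ l = a ^ k * a ^ (l - k)) by (rewrite <- pow_add; f_equal; lia).
        rewrite hal. field. split; auto. }
    rewrite !Rabs_mult.
    assert (h1 : Rabs (/ a ^ (l - k)) <= 1).
    { rewrite Rabs_inv, <- RPow_abs.
      pose proof (pow_R1_Rle (Rabs a) (l - k) ltac:(lra)).
      rewrite <- Rinv_1. apply Rinv_le_contravar; lra. }
    pose proof (HMu k). pose proof (HMp l).
    pose proof (Rabs_pos (psi k / a ^ k)). pose proof (Rabs_pos (a ^ l * psim l)).
    pose proof (Rabs_pos (/ a ^ (l - k))).
    assert (Rabs (psi k / a ^ k) * Rabs (a ^ l * psim l) <= Mu * Mp)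
      by (apply Rmult_le_compat; auto).
    rewrite <- (Rabs_mult (a ^ l)). pose proof (Rmult_le_compat_l _ _ _ (Rmult_le_pos _ _ H3 H4) h1). lra. }
  split; [|split].
  - intros psi Hpsi Hind.
    exists (wronskian psim psi 0 * a / (a ^ 2 - 1)). split.
    2: apply (key V a psim Ha Hsol Hlim psi Hpsi).
    intro hC.
    assert (hW : wronskian psim psi 0 = 0).
    { apply (Rmult_eq_reg_r (a / (a ^ 2 - 1))).
      - rewrite Rmult_0_l. rewrite <- hC. field. lra.
      - intro h. apply Rmult_integral in h. destruct h as [h|h]; [auto|].
        apply Rinv_neq_0_compat in h; auto; lra. }
    unfold wronskian in hW.
    apply Hind.
    assert (Hcomb : forall al be, is_solution V (fun n => al * psi n + be * psim n)).
    { intros al be n hn. pose proof (Hpsi n hn). pose proof (Hsol n hn).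
      unfold schr in *. nra. }
    destruct (Req_dec (psim 0%nat) 0) as [h0|h0];
    [destruct (Req_dec (psim 1%nat) 0) as [h1|h1]|].
    + exfalso. pose proof (zero_sol V psim Hsol h0 h1) as hz.
      assert (is_lim_seq (fun n => a ^ n * psim n) 0).
      { apply is_lim_seq_ext with (u := fun _ => 0).
        intro n; rewrite hz; ring. apply is_lim_seq_const. }
      pose proof (is_lim_seq_unique _ _ H) as u1.
      rewrite (is_lim_seq_unique _ _ Hlim) in u1. injection u1. lra.
    + exists (psim 1%nat), (- psi 1%nat). split; [auto|].
      apply zero_sol with (V := V); auto; lra.
    + exists (psim 0%nat), (- psi 0%nat). split; [auto|].
      apply zero_sol with (V := V); auto; lra.
  - intros psi Hpsi.
    destruct (cv_bound _ _ (key V a psim Ha Hsol Hlim psi Hpsi)) as [Mu HMu].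
    exists (Mu * Mp). intro n.
    replace (psi n * psim n) with ((psi n / a ^ n) * (a ^ n * psim n))
      by (field; apply pow_nonzero; auto).
    rewrite Rabs_mult. apply Rmult_le_compat; auto using Rabs_pos.
  - intros c d psip _ Hp _ _ _.
    destruct (Hprod psip Hp) as [B [HB0 HB]].
    exists (B * Rabs (/ wronskian psim psip 1)). intros m n _ _.
    unfold green, Rdiv. rewrite Rabs_mult.
    apply Rmult_le_compat_r; [apply Rabs_pos|].
    apply HB. lia.
Qed.
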